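(* Let $\Gamma\le E(n)$ be discrete, and let $(G,V)$ be a finite index cocompact translation pair of $\Gamma$ such that $G$ is abelian and $V$ is a linear subspace. Let $k=\dim\Gamma$ and suppose $k<n-2$. Then there exist half-lines $L_1,L_2\subset V^\perp$ starting from $0$ such that the following holds: if $\sigma'$ is a path from $L_1$ to $GL_2=\bigcup_{\gamma\in G}\gamma(L_2)$ and $s=\inf_t d(V,\sigma'(t))>0$, then $\operatorname{len}(\sigma')\ge\sqrt2\,s$.
   Context: $E(n)$ is the isometry group of $\mathbb{R}^n$ (maps $x\mapsto Bx+b$, $B\in O(n)$) with the topology of $O(n)\times\mathbb{R}^n$. For a discrete $\Gamma\le E(n)$, a subgroup $G\le\Gamma$ and an affine subspace $V$, $(G,V)$ is a cocompact translation pair of $\Gamma$ if $gV=V$ and $g|_V$ is a translation of $V$ for all $g\in G$, and $V/G$ is compact; it is a finite index cocompact translation pair if moreover $[\Gamma:G]<\infty$. $\dim\Gamma:=\dim V$ for any such pair (independent of choice). $V^\perp$ is the linear orthogonal complement of $V$, and $\operatorname{len}$ denotes Euclidean length of a path. *)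

(* Defs.v *)
From mathcomp Require Import ssreflect ssrfun ssrbool eqtype ssrnat seq fintype bigop.
From Stdlib Require Import Reals.
Set Implicit Arguments. Unset Strict Implicit.
Open Scope R_scope.

Definition vec (n : nat) := 'I_n -> R.
Definition vzero {n} : vec n := fun _ => 0.
Definition vadd {n} (x y : vec n) : vec n := fun i => x i + y i.
Definition vsub {n} (x y : vec n) : vec n := fun i => x i - y i.
Definition vscale {n} (c : R) (x : vec n) : vec n := fun i => c * x i.
Definition dot {n} (x y : vec n) : R := \big[Rplus/0]_(i < n) (x i * y i).
Definition vnorm {n} (x : vec n) : R := sqrt (dot x x).
Definition vdist {n} (x y : vec n) : R := vnorm (vsub x y).

Definition is_glb (E : R -> Prop) (m : R) : Prop :=
  (forall x, E x -> m <= x) /\ (forall b, (forall x, E x -> b <= x) -> b <= m).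

Definition orthogonal {n} (B : 'I_n -> 'I_n -> R) : Prop :=
  forall i j, \big[Rplus/0]_(k < n) (B k i * B k j) = if i == j then 1 else 0.

Definition is_isometry {n} (f : vec n -> vec n) : Prop :=
  exists (B : 'I_n -> 'I_n -> R) (b : vec n), orthogonal B /\
    forall x, f x = (fun i => \big[Rplus/0]_(j < n) (B i j * x j) + b i).

Definition ebasis {n} (j : 'I_n) : vec n := fun i => if i == j then 1 else 0.
Definition lin_part {n} (f : vec n -> vec n) (i j : 'I_n) : R :=
  f (ebasis j) i - f vzero i.
Definition trans_part {n} (f : vec n -> vec n) : vec n := f vzero.

Definition is_subgroup_En {n} (H : (vec n -> vec n) -> Prop) : Prop :=
  (forall g, H g -> is_isometry g) /\
  H (fun x => x) /\
  (forall g h, H g -> H h -> H (fun x => g (h x))) /\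
  (forall g, H g -> exists h, H h /\ (forall x, h (g x) = x) /\ (forall x, g (h x) = x)).

(* discreteness for the topology of O(n) x R^n (every point is isolated) *)
Definition discrete_En {n} (H : (vec n -> vec n) -> Prop) : Prop :=
  forall g, H g -> exists eps, 0 < eps /\
    forall h, H h ->
      (forall i j, Rabs (lin_part h i j - lin_part g i j) < eps) ->
      (forall i, Rabs (trans_part h i - trans_part g i) < eps) ->
      h = g.

Definition subgroup_of {n} (G H : (vec n -> vec n) -> Prop) : Prop :=
  is_subgroup_En G /\ forall g, G g -> H g.

(* [H : G] < infinity : finitely many right cosets G r cover H *)
Definition finite_index {n} (G H : (vec n -> vec n) -> Prop) : Prop :=
  exists reps : list (vec n -> vec n),
    (forall r, List.In r reps -> H r) /\
    forall h, H h -> exists r g, List.In r reps /\ G g /\ h = (fun x => g (r x)).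

Definition abelian {n} (G : (vec n -> vec n) -> Prop) : Prop :=
  forall g h, G g -> G h -> forall x, g (h x) = h (g x).

Definition linear_subspace {n} (V : vec n -> Prop) : Prop :=
  V vzero /\ (forall x y, V x -> V y -> V (vadd x y)) /\
  (forall c x, V x -> V (vscale c x)).

(* V has dimension k : it has an orthonormal basis with k elements *)
Definition has_dim {n} (V : vec n -> Prop) (k : nat) : Prop :=
  exists u : 'I_k -> vec n,
    (forall a b, dot (u a) (u b) = if a == b then 1 else 0) /\
    forall x, V x <-> exists c : 'I_k -> R,
      x = (fun i => \big[Rplus/0]_(a < k) (c a * u a i)).

Definition orth_compl {n} (V : vec n -> Prop) : vec n -> Prop :=
  fun x => forall v, V v -> dot x v = 0.

Definition cocompact_translation_pair {n}
    (G : (vec n -> vec n) -> Prop) (V : vec n -> Prop) : Prop :=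
  (forall g, G g ->
     (forall x, V x -> V (g x)) /\ (forall y, V y -> exists x, V x /\ g x = y) /\
     (exists t : vec n, forall x, V x -> g x = vadd x t)) /\
  (* V/G compact: a compact subset (closed ball of V) meets every G-orbit in V *)
  (exists Rad, forall x, V x -> exists g y, G g /\ V y /\ vnorm y <= Rad /\ g y = x).

Definition half_line {n} (u : vec n) : vec n -> Prop :=
  fun x => exists t, 0 <= t /\ x = vscale t u.

Definition dist_to_set_is {n} (V : vec n -> Prop) (x : vec n) (d : R) : Prop :=
  is_glb (fun r => exists v, V v /\ r = vdist v x) d.

Definition continuous_path {n} (p : R -> vec n) : Prop :=
  forall t, 0 <= t <= 1 -> forall eps, 0 < eps -> exists delta, 0 < delta /\
    forall t', 0 <= t' <= 1 -> Rabs (t' - t) < delta -> vdist (p t') (p t) < eps.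

(* partitions 0 = t_0 <= t_1 <= ... <= t_m = 1, as the list t_1 ... t_m *)
Fixpoint chain_ok (a : R) (l : list R) : Prop :=
  match l with nil => a = 1 | cons b l' => a <= b /\ chain_ok b l' end.
Definition partition (l : list R) : Prop := chain_ok 0 l.
Fixpoint chord_sum {n} (p : R -> vec n) (a : R) (l : list R) : R :=
  match l with nil => 0 | cons b l' => vdist (p a) (p b) + chord_sum p b l' end.

(* len(p) >= c, where len(p) = sup of inscribed polygon lengths in [0, +oo] *)
Definition length_ge {n} (p : R -> vec n) (c : R) : Prop :=
  forall M, (forall l, partition l -> chord_sum p 0 l <= M) -> c <= M.

(* Main.v *)
Require Import Defs.
From Stdlib Require Import Reals Classical Lia Lra FunctionalExtensionality.
From HB Require Import structures.
From mathcomp Require Import all_boot all_order all_algebra.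
From mathcomp Require Import Rstruct complex zify.
Import GRing.Theory Num.Theory.
Section LAsec.
Local Open Scope ring_scope.

Notation RR := Rdefinitions.R.

Lemma span_exists (n : nat) (F : 'M[RR]_n -> Prop) :
  exists s : seq 'M[RR]_n, (forall M, M \in s -> F M) /\
     forall M, F M -> M \in <<s>>%VS.
Proof.
apply: NNPP => Hno.
have step : forall s : seq 'M[RR]_n, (forall M, M \in s -> F M) ->
   exists M, F M /\ M \notin <<s>>%VS.
  move=> s Hs; apply: NNPP => H2; apply: Hno; exists s; split=> // M FM.
  apply: NNPP => HM; apply: H2; exists M; split=> //; exact/negP.
have big : forall j : nat, exists s : seq 'M[RR]_n, (forall M, M \in s -> F M) /\
    (j <= \dim <<s>>)%N.
  elim=> [|j [s [Hs Hj]]]; first by exists [::].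
  have [M [FM HM]] := step s Hs.
  exists (M :: s); split.
    by move=> N; rewrite inE => /orP [/eqP -> | /Hs].
  apply: leq_ltn_trans Hj _.
  have sub : (<<s>> <= <<M :: s>>)%VS by apply: sub_span => x xs; rewrite inE xs orbT.
  rewrite ltnNge; apply/negP => Hle.
  have : (<<s>> == <<M :: s>>)%VS by rewrite eqEdim sub Hle.
  move/eqP => E; move: HM; rewrite E; apply/negP/negPn.
  by apply: memv_span; rewrite inE eqxx.
have [s [_ Hs]] := big (dim 'M[RR]_n).+1.
move: Hs; rewrite ltnNge -(dimvf 'M[RR]_n).
by rewrite dimvS // subvf.
Qed.
Notation toC := (real_complex RR).
Notation MtoC := (map_mx toC).

Lemma Re_add (a b : RR[i]) : complex.Re (a + b) = complex.Re a + complex.Re b.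
Proof. by case: a; case: b. Qed.
Lemma Im_add (a b : RR[i]) : complex.Im (a + b) = complex.Im a + complex.Im b.
Proof. by case: a; case: b. Qed.
Lemma Re_mulR (z : RR[i]) (r : RR) : complex.Re (z * toC r) = complex.Re z * r.
Proof. case: z => a b /=. rewrite mulr0 subr0. done. Qed.
Lemma Im_mulR (z : RR[i]) (r : RR) : complex.Im (z * toC r) = complex.Im z * r.
Proof. case: z => a b /=. by rewrite mulr0 add0r. Qed.

Lemma ReM p q r (w : 'M[RR[i]]_(p,q)) (M : 'M[RR]_(q,r)) :
  map_mx (@complex.Re _) (w *m MtoC M) = map_mx (@complex.Re _) w *m M.
Proof.
apply/matrixP => i j; rewrite !mxE.
rewrite (big_morph (@complex.Re _) Re_add (erefl _)).
by apply: eq_bigr => l _; rewrite !mxE Re_mulR.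
Qed.
Lemma ImM p q r (w : 'M[RR[i]]_(p,q)) (M : 'M[RR]_(q,r)) :
  map_mx (@complex.Im _) (w *m MtoC M) = map_mx (@complex.Im _) w *m M.
Proof.
apply/matrixP => i j; rewrite !mxE.
rewrite (big_morph (@complex.Im _) Im_add (erefl _)).
by apply: eq_bigr => l _; rewrite !mxE Im_mulR.
Qed.
Lemma ReIm0 p q (w : 'M[RR[i]]_(p,q)) :
  map_mx (@complex.Re _) w = 0 -> map_mx (@complex.Im _) w = 0 -> w = 0.
Proof.
move=> /matrixP H1 /matrixP H2; apply/matrixP => i j.
move: (H1 i j) (H2 i j); rewrite !mxE; case: (w i j) => a b /= -> -> //.
Qed.

Lemma Re0 p q : map_mx (@complex.Re _) (0 : 'M[RR[i]]_(p,q)) = 0.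
Proof. by apply/matrixP => i j; rewrite !mxE. Qed.

Lemma LA n k (Bv : 'M[RR]_(n,k)) (F : 'M[RR]_n -> Prop) :
  (k + 2 < n)%N -> (forall M, F M -> M *m Bv = Bv) ->
  (forall M N, F M -> F N -> M *m N = N *m M) ->
  exists u1 u2 : 'rV[RR]_n, u1 != 0 /\ u2 != 0 /\ u1 *m Bv = 0 /\ u2 *m Bv = 0 /\
    forall M, F M -> u2 *m M *m u1^T = 0.
Proof.
move=> hn hfix hcomm.
have [s [sF sspan]] := span_exists _ F.
pose s' := 1%:M :: s.
have s'fix : forall M, M \in s' -> M *m Bv = Bv.
  by move=> M; rewrite inE => /orP [/eqP -> | /sF /hfix //]; rewrite mul1mx.
have s'comm : forall M N, M \in s' -> N \in s' -> M *m N = N *m M.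
  move=> M N; rewrite !inE => /orP [/eqP -> | /sF HM] /orP [/eqP -> | /sF HN];
    rewrite ?mul1mx ?mulmx1 //; exact: hcomm.
pose Bc := MtoC Bv. pose Wc := kermx Bc.
have stab : forall M, M *m Bv = Bv -> stablemx Wc (MtoC M).
  move=> M HM; rewrite sub_kermx -mulmxA -map_mxM HM.
  by rewrite mulmx_ker.
pose sf := map (fun M => restrict Wc (MtoC M)) s'.
have rk1 : (0 < \rank Wc)%N.
  rewrite /Wc mxrank_ker.
  have := rank_leq_col Bc. move: hn. lia.
have rk2 : (\rank Wc < 2 ^ n.+1)%N.
  apply: leq_ltn_trans (rank_leq_row Wc) _.
  apply: (ltn_trans (ltn_expl n (isT : (1 < 2)%N))); by rewrite ltn_exp2l.
have h1 : ~~ (2 ^ n.+1 %| \rank (1%:M : 'M[RR[i]]_(\rank Wc)))%N.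
  rewrite mxrank1; apply/negP => /dvdn_leq Hd.
  by move: (Hd rk1); rewrite leqNgt rk2.
have h2 : {in sf, forall f, stablemx (1%:M : 'M[RR[i]]_(\rank Wc)) f}.
  by move=> f _; rewrite submx1.
have h3 : {in sf &, forall f g, f *m g = g *m f}.
  move=> f g /mapP [A As ->] /mapP [B Bs ->].
  rewrite -!restrictM ?inE ?stab ?s'fix //.
  by rewrite -!map_mxM (s'comm A B).
have [v0 v0nz Hv] := @Lemma6 RR n (size s) (\rank Wc) 1%:M h1 sf (size_map _ _) h2 h3.
pose w := v0 *m row_base Wc.
have wnz : w != 0 by rewrite mul_mx_rowfree_eq0 ?row_base_free.
have wW : w *m Bc = 0.
  apply/eqP; rewrite -sub_kermx -/Wc.
  by rewrite (submx_trans (submxMl _ _)) // eq_row_base.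
have weig : forall M, M \in s' -> exists a, w *m MtoC M = a *: w.
  move=> M Ms; have [a Ha] := Hv _ (map_f (fun M => restrict Wc (MtoC M)) Ms).
  exists a; apply/eigenspaceP; rewrite -eigenspace_restrict //.
  exact/stab/s'fix.
pose x := map_mx (@complex.Re _) w; pose y := map_mx (@complex.Im _) w.
have xB : x *m Bv = 0 by rewrite /x -ReM wW Re0.
have yB : y *m Bv = 0.
  by rewrite /y -ImM wW; apply/matrixP => i j; rewrite !mxE.
pose T := row_mx Bv (row_mx x^T y^T).
pose u1 := nz_row (kermx T).
have u1nz : u1 != 0.
  rewrite nz_row_eq0 -mxrank_eq0 mxrank_ker.
  have := rank_leq_col T. move: hn. lia.
have u1T : u1 *m T = 0 by apply/eqP; rewrite -sub_kermx nz_row_sub.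
move: u1T; rewrite /T !mul_mx_row => /eqP; rewrite !row_mx_eq0 => /and3P [/eqP u1B /eqP u1x /eqP u1y].
have xu1 : x *m u1^T = 0 by rewrite -[x]trmxK -trmx_mul u1x trmx0.
have yu1 : y *m u1^T = 0 by rewrite -[y]trmxK -trmx_mul u1y trmx0.
have wu1 : w *m MtoC u1^T = 0.
  apply: ReIm0; first by rewrite ReM.
  by rewrite ImM.
have keys : forall M, M \in s' -> x *m M *m u1^T = 0 /\ y *m M *m u1^T = 0.
  move=> M Ms; have [a Ha] := weig M Ms.
  have E : w *m MtoC M *m MtoC u1^T = 0 by rewrite Ha -scalemxAl wu1 scaler0.
  split.
    by rewrite -/x -ReM -ReM E Re0.
  by rewrite -/y -ImM -ImM E; apply/matrixP => i j; rewrite !mxE.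
have key : forall M, M \in <<s>>%VS -> x *m M *m u1^T = 0 /\ y *m M *m u1^T = 0.
  move=> M HM; have := @coord_span _ _ _ (in_tuple s) M HM => ->.
  rewrite !mulmx_sumr !mulmx_suml; split; apply: big1 => i _;
    rewrite -scalemxAr -scalemxAl;
    have Hi : (in_tuple s)`_i \in s' by rewrite inE mem_nth ?orbT.
  - by rewrite (keys _ Hi).1 scaler0.
  - by rewrite (keys _ Hi).2 scaler0.
case: (eqVneq x 0) => Hx.
  exists u1, y; split=> //; split.
    apply/negP => /eqP Hy; move/negP: wnz; apply; apply/eqP; exact: ReIm0.
  split; first exact: u1B. split; first exact: yB.
  by move=> M /sspan /key [].
exists u1, x; split=> //; split=> //; split; first exact: u1B.
split; first exact: xB.
by move=> M /sspan /key [].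
Qed.

End LAsec.

Local Open Scope R_scope.

Section VecLemmas.
Variable n : nat.
Implicit Types x y z : vec n.

Lemma dot_comm x y : dot x y = dot y x.
Proof. by apply: eq_bigr => i _; rewrite Rmult_comm. Qed.

Lemma dot_subl x y z : dot (fun i => x i - y i) z = dot x z - dot y z.
Proof.
rewrite /dot; elim/big_rec3: _ => [|i r1 r2 r3 _ ->]; first by ring.
ring.
Qed.

Lemma dot_scalel c x z : dot (fun i => c * x i) z = c * dot x z.
Proof.
rewrite /dot; elim/big_rec2: _ => [|i r1 r2 _ ->]; first by ring.
ring.
Qed.

Lemma dot_sq_sub x y : dot (fun i => x i - y i) (fun i => x i - y i) =
  dot x x - 2 * dot x y + dot y y.
Proof.
rewrite dot_subl (dot_comm x) (dot_comm y) !dot_subl (dot_comm y x); ring.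
Qed.

Lemma dot_ge0 x : 0 <= dot x x.
Proof.
rewrite /dot; elim/big_rec: _ => [|i r _ Hr]; first by apply: Rle_refl.
have := Rle_0_sqr (x i); rewrite /Rsqr => H; lra.
Qed.

Lemma dot_sum k (c : 'I_k -> R) (u : 'I_k -> vec n) x :
  dot x (fun i => \big[Rplus/0]_(a < k) (c a * u a i)) =
  \big[Rplus/0]_(a < k) (c a * dot x (u a)).
Proof.
rewrite /dot.
under eq_bigr => i _ do rewrite big_distrr /=.
rewrite exchange_big /=.
apply: eq_bigr => a _; rewrite big_distrr /=.
by apply: eq_bigr => i _; ring.
Qed.

End VecLemmas.

Lemma vdist_dot n (x y : vec n) : vdist x y = sqrt (dot (fun i => x i - y i) (fun i => x i - y i)).
Proof. by []. Qed.

Lemma near_lemma n (V : vec n -> Prop) (c p b : vec n) :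
  (forall i, b i = c i + p i) -> V c -> (forall v, V v -> dot p v = 0) ->
  dist_to_set_is V b (sqrt (dot p p)).
Proof.
move=> Hb Vc Hp.
have E : vdist c b = sqrt (dot p p).
  rewrite vdist_dot.
  have -> : (fun i => c i - b i) = (fun i => (-1) * p i).
    by apply: functional_extensionality => i; rewrite Hb; ring.
  rewrite dot_scalel dot_comm dot_scalel; f_equal; ring.
split.
  move=> r [v [Vv ->]]; rewrite -E !vdist_dot.
  apply: sqrt_le_1_alt.
  have -> : (fun i => v i - b i) = (fun i => (v i - c i) - p i).
    by apply: functional_extensionality => i; rewrite Hb; ring.
  have -> : (fun i => c i - b i) = (fun i => (-1) * p i).
    by apply: functional_extensionality => i; rewrite Hb; ring.
  rewrite dot_sq_sub (dot_subl _ v c p) (dot_comm _ v p) (dot_comm _ c p) (Hp _ Vv) (Hp _ Vc).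
  rewrite dot_scalel dot_comm dot_scalel.
  have := dot_ge0 _ (fun i => v i - c i); lra.
move=> b' Hb'; rewrite -E; apply: Hb'; exists c; split => //.
Qed.

Lemma final_ineq n (a p c : vec n) (s : R) :
  0 < s -> dot a c = 0 -> dot p c = 0 -> dot a p = 0 ->
  s <= sqrt (dot a a) -> s <= sqrt (dot p p) ->
  sqrt 2 * s <= vdist a (fun i => c i + p i).
Proof.
move=> s0 ac pc ap sa sp.
rewrite vdist_dot.
have -> : (fun i => a i - (c i + p i)) = (fun i => (a i - p i) - c i).
  by apply: functional_extensionality => i; ring.
rewrite dot_sq_sub (dot_subl _ a p c) ac pc dot_sq_sub ap.
have h1 : s * s <= dot a a.
  have := dot_ge0 _ a => H.
  rewrite -(sqrt_sqrt (dot a a)) //; apply: Rmult_le_compat; lra.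
have h2 : s * s <= dot p p.
  have := dot_ge0 _ p => H.
  rewrite -(sqrt_sqrt (dot p p)) //; apply: Rmult_le_compat; lra.
have h3 := dot_ge0 _ c.
rewrite -(sqrt_square s); last by lra.
rewrite -sqrt_mult; try lra.
  apply: sqrt_le_1_alt; lra.
nra.
Qed.

Set Implicit Arguments. Unset Strict Implicit.

Lemma big_delta k (f : 'I_k -> R) a :
  \big[Rplus/0]_(b < k) (f b * (if b == a then 1 else 0)) = f a.
Proof.
rewrite (bigD1 a) //= eqxx big1 => [|b /negbTE -> ]; ring.
Qed.

Lemma big_sub k (f g : 'I_k -> R) :
  \big[Rplus/0]_(l < k) f l - \big[Rplus/0]_(l < k) g l = \big[Rplus/0]_(l < k) (f l - g l).
Proof. elim/big_rec3: _ => [|i r1 r2 r3 _ H]; lra. Qed.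

Lemma lin_part_eq n (g : vec n -> vec n) B b :
  (forall x, g x = (fun i => \big[Rplus/0]_(j < n) (B i j * x j) + b i)) ->
  forall i j, lin_part g i j = B i j.
Proof.
move=> Hg i j; rewrite /lin_part !Hg /ebasis /vzero big_delta big1 => [|l _]; ring.
Qed.

Lemma lin_apply n (g : vec n -> vec n) : is_isometry g ->
  forall x i, g x i = \big[Rplus/0]_(j < n) (lin_part g i j * x j) + g vzero i.
Proof.
move=> [B [b [_ Hg]]] x i.
have E := lin_part_eq Hg.
have Z : \big[Rplus/0]_(j < n) (B i j * vzero j) = 0.
  by rewrite big1 // => l _; rewrite /vzero; ring.
rewrite (Hg x) (Hg vzero) Z Rplus_0_l; f_equal; apply: eq_bigr => j _; by rewrite E.
Qed.

Lemma lin_orth n (g : vec n -> vec n) : is_isometry g ->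
  forall i j, \big[Rplus/0]_(k < n) (lin_part g k i * lin_part g k j) = if i == j then 1 else 0.
Proof.
move=> [B [b [HB Hg]]] i j.
have E := lin_part_eq Hg.
rewrite -HB; apply: eq_bigr => l _; by rewrite !E.
Qed.

Lemma comp_lin n (g h : vec n -> vec n) : is_isometry g -> is_isometry h ->
  forall j i, g (h (ebasis i)) j - g (h vzero) j =
     \big[Rplus/0]_(l < n) (lin_part g j l * lin_part h l i).
Proof.
move=> Hg Hh j i.
rewrite (lin_apply Hg (h (ebasis i))) (lin_apply Hg (h vzero)).
have : forall l, h (ebasis i) l = lin_part h l i + h vzero l.
  move=> l; rewrite (lin_apply Hh (ebasis i)) /ebasis big_delta //.
move=> Hl.
under eq_bigr => l _ do rewrite Hl.
have -> : forall A B : R, A + g vzero j - (B + g vzero j) = A - B by move=> *; ring.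
rewrite big_sub; apply: eq_bigr => l _; ring.
Qed.

Lemma big_delta' k (f : 'I_k -> R) a :
  \big[Rplus/0]_(b < k) ((if a == b then 1 else 0) * f b) = f a.
Proof.
rewrite (bigD1 a) //= eqxx big1 => [|b Hb]; first ring.
rewrite eq_sym (negbTE Hb); ring.
Qed.

Theorem mainTheorem20 (n : nat) (Gamma G : (vec n -> vec n) -> Prop)
    (V : vec n -> Prop) (k : nat) :
  is_subgroup_En Gamma -> discrete_En Gamma ->
  subgroup_of G Gamma -> finite_index G Gamma ->
  cocompact_translation_pair G V ->
  abelian G -> linear_subspace V ->
  has_dim V k -> (k + 2 < n)%nat ->
  exists u1 u2 : vec n,
    u1 <> vzero /\ u2 <> vzero /\ orth_compl V u1 /\ orth_compl V u2 /\
    forall (sigma : R -> vec n) (s : R),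
      continuous_path sigma ->
      half_line u1 (sigma 0) ->
      (exists g y, G g /\ half_line u2 y /\ sigma 1 = g y) ->
      is_glb (fun r => exists t, 0 <= t <= 1 /\ dist_to_set_is V (sigma t) r) s ->
      0 < s ->
      length_ge sigma (sqrt 2 * s).
Proof.
move=> _ _ [[HGiso _] _] _ [Hpair _] Hab [V0 _] [u [Hon Hspan]] Hk.
have orthB : forall w : vec n, (forall a, dot w (u a) = 0) -> orth_compl V w.
  move=> w Hw v /(Hspan v).1 [c ->]; rewrite dot_sum big1 // => a _; rewrite Hw; ring.
have Vu : forall a, V (u a).
  move=> a; apply/(Hspan _).2; exists (fun b => if a == b then 1 else 0).
  by apply: functional_extensionality => i; rewrite big_delta'.
have Bfix : forall g, G g -> forall a i,
    \big[Rplus/0]_(j < n) (lin_part g i j * u a j) = u a i.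
  move=> g Gg a i.
  have [_ [_ [t Ht]]] := Hpair g Gg.
  have := lin_apply (HGiso g Gg) (u a) i.
  rewrite (Ht _ (Vu a)) (Ht _ V0) /vadd /vzero; lra.
have BTfix : forall g, G g -> forall a j,
    \big[Rplus/0]_(i < n) (lin_part g i j * u a i) = u a j.
  move=> g Gg a j.
  transitivity (\big[Rplus/0]_(i < n) \big[Rplus/0]_(l < n)
      (lin_part g i j * (lin_part g i l * u a l))).
    by apply: eq_bigr => i _; rewrite -(Bfix g Gg a i) big_distrr.
  rewrite exchange_big /=.
  transitivity (\big[Rplus/0]_(l < n)
      ((\big[Rplus/0]_(i < n) (lin_part g i j * lin_part g i l)) * u a l)).
    apply: eq_bigr => l _; rewrite big_distrl /=.
    by apply: eq_bigr => i _; ring.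
  under eq_bigr => l _ do rewrite (lin_orth (HGiso g Gg)).
  exact: big_delta'.
have Bcomm : forall g h, G g -> G h -> forall j i,
   \big[Rplus/0]_(l < n) (lin_part g j l * lin_part h l i) =
   \big[Rplus/0]_(l < n) (lin_part h j l * lin_part g l i).
  move=> g h Gg Gh j i.
  rewrite -(comp_lin (HGiso g Gg) (HGiso h Gh)) -(comp_lin (HGiso h Gh) (HGiso g Gg)).
  by rewrite !(Hab g h Gg Gh).
pose Mg (g : vec n -> vec n) : 'M[R]_n := (\matrix_(i, j) lin_part g j i)%R.
pose Bv : 'M[R]_(n, k) := (\matrix_(i, a) u a i)%R.
pose F (M : 'M[R]_n) := exists g, G g /\ M = Mg g.
have hfix : forall M, F M -> (M *m Bv = Bv)%R.
  move=> M [g [Gg ->]]; apply/matrixP => i a.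
  rewrite !mxE -(BTfix g Gg a i).
  by apply: eq_bigr => j _; rewrite !mxE.
have hcomm : forall M N, F M -> F N -> (M *m N = N *m M)%R.
  move=> M N [g [Gg ->]] [h [Gh ->]]; apply/matrixP => i j.
  rewrite !mxE.
  transitivity (\big[Rplus/0]_(l < n) (lin_part h j l * lin_part g l i)).
    by apply: eq_bigr => l _; rewrite !mxE /=; apply: Rmult_comm.
  rewrite -Bcomm //.
  by apply: eq_bigr => l _; rewrite !mxE /=; apply: Rmult_comm.
have [u1m [u2m [u1nz [u2nz [u1B [u2B key]]]]]] := @LA n k Bv F Hk hfix hcomm.
have vnz : forall m : 'rV[R]_n, m != 0%R -> (fun i => m ord0 i) <> vzero.
  move=> m mnz H; move/negP: mnz; apply; apply/eqP/matrixP => i j.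
  rewrite (ord1 i) !mxE; exact: (f_equal (fun f => f j) H).
have orthm : forall m : 'rV[R]_n, (m *m Bv = 0)%R -> forall a, dot (fun i => m ord0 i) (u a) = 0.
  move=> m Hm a; move/matrixP: Hm => /(_ ord0 a); rewrite !mxE => E.
  apply: (etrans _ E).
  by apply: eq_bigr => j _; rewrite !mxE.
pose u1 : vec n := fun i => u1m ord0 i.
pose u2 : vec n := fun i => u2m ord0 i.
pose Bu2 (g : vec n -> vec n) : vec n :=
  fun i => \big[Rplus/0]_(j < n) (u2 j * lin_part g i j).
have FMg : forall g, G g -> F (Mg g) by move=> g Gg; exists g.
have key1 : forall g, G g -> dot (Bu2 g) u1 = 0.
  move=> g Gg; move/matrixP: (key _ (FMg g Gg)) => /(_ ord0 ord0); rewrite !mxE => E.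
  apply: (etrans _ E).
  apply: eq_bigr => i _; rewrite !mxE; congr (_ * _).
  by apply: eq_bigr => j _; rewrite !mxE.
have key2 : forall g, G g -> forall a, dot (Bu2 g) (u a) = 0.
  move=> g Gg a.
  have : ((u2m *m Mg g) *m Bv = 0)%R by rewrite -mulmxA (hfix _ (FMg g Gg)).
  move/matrixP => /(_ ord0 a); rewrite !mxE => E.
  apply: (etrans _ E).
  apply: eq_bigr => i _; rewrite !mxE; congr (_ * _).
  by apply: eq_bigr => j _; rewrite !mxE.
exists u1, u2; split; first exact: vnz.
split; first exact: vnz.
split; first exact/orthB/orthm.
split; first exact/orthB/orthm.
move=> sigma s _ [t1 [t1pos Ha]] [g [y [Gg [[t2 [t2pos Hy]] Hb]]]] Hglb spos.
pose c := g vzero.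
pose p : vec n := fun i => sigma 1 i - c i.
have Vc : V c by apply: (Hpair g Gg).1.
have pval : p = (fun i => t2 * Bu2 g i).
  apply: functional_extensionality => i.
  rewrite /p Hb Hy (lin_apply (HGiso g Gg) _ i) /c /Bu2 /vscale big_distrr /=.
  have -> : forall A B : R, A + B - B = A by move=> *; ring.
  by apply: eq_bigr => j _; ring.
have porth : forall v, V v -> dot p v = 0.
  move=> v Vv; rewrite pval dot_scalel (orthB _ (key2 g Gg) v Vv); ring.
have aorth : forall v, V v -> dot (sigma 0) v = 0.
  move=> v Vv; rewrite Ha /vscale dot_scalel.
  rewrite (orthB _ (orthm _ u1B) v Vv); ring.
have d1 := @near_lemma n V c p (sigma 1) ltac:(move=> i; rewrite /p; ring) Vc porth.
have d0 := @near_lemma n V vzero (sigma 0) (sigma 0) ltac:(move=> i; rewrite /vzero; ring) V0 aorth.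
have s0 : s <= sqrt (dot (sigma 0) (sigma 0)).
  apply: Hglb.1; exists 0; split => //; lra.
have s1 : s <= sqrt (dot p p).
  apply: Hglb.1; exists 1; split => //; lra.
have ap : dot (sigma 0) p = 0.
  rewrite Ha pval /vscale dot_scalel dot_comm dot_scalel key1 //; ring.
move=> M HM.
have := HM [:: 1]; rewrite /partition /=.
have Hfin := @final_ineq n (sigma 0) p c s spos (aorth c Vc) (porth c Vc) ap s0 s1.
have E : (fun i => c i + p i) = sigma 1.
  by apply: functional_extensionality => i; rewrite /p; ring.
rewrite E in Hfin.
move=> H; have := H (conj (Rle_0_1) erefl); lra.
Qed.
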